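(* Let $\mathcal{E}=(E,\vdash)$ be an event structure and let $C$ be its set of left-closed configurations. Then: (1) if $\mathcal{E}$ is singular, $C$ is closed under bounded unions; (2) if $\mathcal{E}$ is conjunctive, $C$ is closed under nonempty intersections; (3) if $\mathcal{E}$ is locally conjunctive, $C$ is closed under bounded nonempty intersections; (4) if $\mathcal{E}$ has finite conflict, so does $(E,C)$; (5) if $\mathcal{E}$ has binary conflict, so does $(E,C)$; (6) if $\mathcal{E}$ is singular and has finite conflict, $C$ is closed under finitely consistent unions; (7) if $\mathcal{E}$ is singular and has binary conflict, $C$ is closed under pairwise consistent unions; (8) if $\mathcal{E}$ is locally conjunctive and has finite conflict, $C$ is closed under finitely consistent nonempty intersections; (9) if $\mathcal{E}$ is locally conjunctive and has binary conflict, $C$ is closed under pairwise consistent nonempty intersections.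
   Context: An event structure is $(E,\vdash)$ with $\vdash\subseteq\mathcal{P}(E)\times\mathcal{P}(E)$; $X\subseteq E$ is a left-closed configuration iff for all $Y\subseteq X$ there is $Z\subseteq X$ with $Z\vdash Y$. For the event structure write $\mathrm{Con}(X)$ iff for every $Y\subseteq X$ there is $Z\subseteq E$ with $Z\vdash Y$. The event structure is singular if $X\vdash Y$ implies $X=\emptyset$ or $|Y|=1$; conjunctive if whenever $X_i\vdash Y$ for all $i\in I\neq\emptyset$ then $\bigcap_{i}X_i\vdash Y$; locally conjunctive if whenever $X_i\vdash Y$ for all $i\in I\ne\emptyset$ and $\mathrm{Con}(\bigcup_iX_i\cup Y)$ then $\bigcap_iX_i\vdash Y$; it has finite conflict if $\emptyset\vdash X$ for every infinite $X$; binary conflict if $\emptyset\vdash X$ for every $X$ with $|X|>2$. For a configuration structure $(E,C)$ ($C\subseteq\mathcal{P}(E)$): $X$ is consistent, $\mathrm{Con}_C(X)$, if $X\subseteq z$ for some $z\in C$; finitely consistent if every finite subset is consistent; pairwise consistent if every subset of size $\le2$ is consistent. $C$ is closed under bounded unions if $A\subseteq C$ and $\bigcup A$ consistent imply $\bigcup A\in C$; under nonempty intersections if $\emptyset\ne A\subseteq C$ implies $\bigcap A\in C$; under bounded nonempty intersections if $\emptyset\ne A\subseteq C$ and $\bigcup A$ consistent imply $\bigcap A\in C$; under finitely (resp. pairwise) consistent unions if $A\subseteq C$ and $\bigcup A$ finitely (resp. pairwise) consistent imply $\bigcup A\in C$; under finitely (resp. pairwise) consistent nonempty intersections if $\emptyset\ne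 A\subseteq C$ and $\bigcup A$ finitely (resp. pairwise) consistent imply $\bigcap A\in C$. $(E,C)$ has finite conflict if, for every $X\subseteq E$, whenever every finite $Y\subseteq X$ satisfies $Y\subseteq z\subseteq X$ for some $z\in C$, then $X\in C$; it has binary conflict if the same holds with ''finite $Y$'' replaced by ''$Y$ with $|Y|\le2$''. *)

(* Defs.v *)
From mathcomp Require Import all_boot.
From mathcomp Require Import boolp classical_sets cardinality.

Set Implicit Arguments.
Unset Strict Implicit.
Unset Printing Implicit Defensive.

Local Open Scope classical_set_scope.

Definition enabling (E : Type) := set E -> set E -> Prop.

Definition atmost2 (E : Type) (X : set E) : Prop :=
  forall a b c, X a -> X b -> X c -> a = b \/ a = c \/ b = c.

Section EventStructures.
Variable E : Type.
Implicit Types (ent : enabling E) (X Y Z : set E) (C A : set (set E)).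

Definition lconf ent X : Prop :=
  forall Y, Y `<=` X -> exists Z, Z `<=` X /\ ent Z Y.

Definition Con ent X : Prop := forall Y, Y `<=` X -> exists Z, ent Z Y.

Definition singular ent : Prop :=
  forall X Y, ent X Y -> X = set0 \/ exists y, Y = [set y].

(* families {X_i}_{i in I}, I nonempty, are represented by nonempty sets of sets *)
Definition conjunctive ent : Prop :=
  forall (F : set (set E)) Y, F !=set0 -> (forall X, F X -> ent X Y) ->
    ent (\bigcap_(X in F) X) Y.

Definition locally_conjunctive ent : Prop :=
  forall (F : set (set E)) Y, F !=set0 -> (forall X, F X -> ent X Y) ->
    Con ent ((\bigcup_(X in F) X) `|` Y) ->
    ent (\bigcap_(X in F) X) Y.

Definition es_finite_conflict ent : Prop :=
  forall X, ~ finite_set X -> ent set0 X.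

Definition es_binary_conflict ent : Prop :=
  forall X, ~ atmost2 X -> ent set0 X.

Definition ConC C X : Prop := exists z, C z /\ X `<=` z.

Definition fin_consistent C X : Prop :=
  forall Y, Y `<=` X -> finite_set Y -> ConC C Y.

Definition pair_consistent C X : Prop :=
  forall Y, Y `<=` X -> atmost2 Y -> ConC C Y.

Definition closed_bounded_unions C : Prop :=
  forall A, A `<=` C -> ConC C (\bigcup_(x in A) x) -> C (\bigcup_(x in A) x).

Definition closed_nonempty_intersections C : Prop :=
  forall A, A !=set0 -> A `<=` C -> C (\bigcap_(x in A) x).

Definition closed_bounded_nonempty_intersections C : Prop :=
  forall A, A !=set0 -> A `<=` C -> ConC C (\bigcup_(x in A) x) ->
    C (\bigcap_(x in A) x).

Definition closed_fin_consistent_unions C : Prop :=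
  forall A, A `<=` C -> fin_consistent C (\bigcup_(x in A) x) ->
    C (\bigcup_(x in A) x).

Definition closed_pair_consistent_unions C : Prop :=
  forall A, A `<=` C -> pair_consistent C (\bigcup_(x in A) x) ->
    C (\bigcup_(x in A) x).

Definition closed_fin_consistent_nonempty_intersections C : Prop :=
  forall A, A !=set0 -> A `<=` C -> fin_consistent C (\bigcup_(x in A) x) ->
    C (\bigcap_(x in A) x).

Definition closed_pair_consistent_nonempty_intersections C : Prop :=
  forall A, A !=set0 -> A `<=` C -> pair_consistent C (\bigcup_(x in A) x) ->
    C (\bigcap_(x in A) x).

Definition cs_finite_conflict C : Prop :=
  forall X, (forall Y, Y `<=` X -> finite_set Y ->
               exists z, C z /\ Y `<=` z /\ z `<=` X) -> C X.

Definition cs_binary_conflict C : Prop :=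
  forall X, (forall Y, Y `<=` X -> atmost2 Y ->
               exists z, C z /\ Y `<=` z /\ z `<=` X) -> C X.

End EventStructures.

(* Main.v *)
Require Import Defs.
From mathcomp Require Import all_boot.
From mathcomp Require Import boolp classical_sets cardinality.

Local Open Scope classical_set_scope.

Section S.
Variables (E : Type) (ent : enabling E).

Lemma L_union (A : set (set E)) : singular ent -> A `<=` lconf ent ->
  Con ent (\bigcup_(x in A) x) -> lconf ent (\bigcup_(x in A) x).
Proof.
move=> sg AC hC Y YU.
have [Z hZ] := hC Y YU.
case: (sg _ _ hZ) => [Z0|[y Yy]].
  exists Z; split => //; rewrite Z0; exact: sub0set.
have : Y y by rewrite Yy.
move=> /YU [x Ax xy].
have Yx : Y `<=` x by rewrite Yy => w ->.
have [Z' [Z'x hZ']] := AC x Ax Y Yx.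
exists Z'; split => // w /Z'x xw; by exists x.
Qed.

Lemma L_inter (A : set (set E)) : A !=set0 -> A `<=` lconf ent ->
  (forall (F : set (set E)) Y, F !=set0 -> (forall X, F X -> ent X Y) ->
     ((\bigcup_(X in F) X) `|` Y) `<=` (\bigcup_(x in A) x) ->
     ent (\bigcap_(X in F) X) Y) ->
  lconf ent (\bigcap_(x in A) x).
Proof.
move=> [x0 Ax0] AC H Y YI.
pose F := [set Z | exists x, A x /\ Z `<=` x /\ ent Z Y].
have hF : F !=set0.
  have [Z [Zx hZ]] := AC x0 Ax0 Y (fun w Yw => YI w Yw x0 Ax0).
  by exists Z; exists x0.
exists (\bigcap_(X in F) X); split; last first.
  apply: H => //.
  - by move=> X [x [_ [_ h]]].
  - move=> w [[Z [x [Ax [Zx _]]] Zw]|Yw].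
      by exists x => //; apply: Zx.
    by exists x0 => //; apply: YI.
move=> w Iw; rewrite /bigcap /=; move=> x Ax; rewrite /bigcap /= in Iw.
have [Z [Zx hZ]] := AC x Ax Y (fun w Yw => YI w Yw x Ax).
apply: (Zx); apply: Iw; exists x; split => //.
Qed.

Lemma Con_sub z X : lconf ent z -> X `<=` z -> Con ent X.
Proof. move=> hz Xz Y YX; have [Z [_ h]] := hz Y (subset_trans YX Xz); by exists Z. Qed.

Lemma Con_fin X : es_finite_conflict ent ->
  fin_consistent (lconf ent) X -> Con ent X.
Proof.
move=> fc hX Y YX.
case: (pselect (finite_set Y)) => fY; last by exists set0; apply: fc.
have [z [Cz Yz]] := hX Y YX fY.
have [Z [_ h]] := Cz Y Yz; by exists Z.
Qed.

Lemma Con_pair X : es_binary_conflict ent ->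
  pair_consistent (lconf ent) X -> Con ent X.
Proof.
move=> fc hX Y YX.
case: (pselect (atmost2 Y)) => fY; last by exists set0; apply: fc.
have [z [Cz Yz]] := hX Y YX fY.
have [Z [_ h]] := Cz Y Yz; by exists Z.
Qed.

Lemma Con_subset X Y : Con ent X -> Y `<=` X -> Con ent Y.
Proof. move=> h YX W WY; exact: h (subset_trans WY YX). Qed.

End S.

Theorem mainTheorem11 (E : Type) (ent : enabling E) :
  let C : set (set E) := lconf ent in
  (singular ent -> closed_bounded_unions C) /\
  (conjunctive ent -> closed_nonempty_intersections C) /\
  (locally_conjunctive ent -> closed_bounded_nonempty_intersections C) /\
  (es_finite_conflict ent -> cs_finite_conflict C) /\
  (es_binary_conflict ent -> cs_binary_conflict C) /\
  (singular ent -> es_finite_conflict ent -> closed_fin_consistent_unions C) /\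
  (singular ent -> es_binary_conflict ent -> closed_pair_consistent_unions C) /\
  (locally_conjunctive ent -> es_finite_conflict ent ->
     closed_fin_consistent_nonempty_intersections C) /\
  (locally_conjunctive ent -> es_binary_conflict ent ->
     closed_pair_consistent_nonempty_intersections C).
Proof.
move=> C; split; [|split; [|split; [|split; [|split; [|split; [|split; [|split]]]]]]].
- move=> sg A AC [z [Cz Uz]]; apply: L_union => //; exact: Con_sub Cz Uz.
- move=> cj A A0 AC; apply: L_inter => // F Y F0 hF _; exact: cj.
- move=> lc A A0 AC [z [Cz Uz]]; apply: L_inter => // F Y F0 hF sub.
  apply: lc => //; apply: Con_sub Cz _; exact: subset_trans sub Uz.
- move=> fc X hX Y YX.
  case: (pselect (finite_set Y)) => fY; last first.
    by exists set0; split; [exact: sub0set| apply: fc].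
  have [z [Cz [Yz zX]]] := hX Y YX fY.
  have [Z [Zz h]] := Cz Y Yz; exists Z; split => //; exact: subset_trans Zz zX.
- move=> fc X hX Y YX.
  case: (pselect (atmost2 Y)) => fY; last first.
    by exists set0; split; [exact: sub0set| apply: fc].
  have [z [Cz [Yz zX]]] := hX Y YX fY.
  have [Z [Zz h]] := Cz Y Yz; exists Z; split => //; exact: subset_trans Zz zX.
- move=> sg fc A AC hA; apply: L_union => //; exact: Con_fin.
- move=> sg fc A AC hA; apply: L_union => //; exact: Con_pair.
- move=> lc fc A A0 AC hA; apply: L_inter => // F Y F0 hF sub.
  apply: lc => //; apply: Con_subset sub; exact: Con_fin.
- move=> lc fc A A0 AC hA; apply: L_inter => // F Y F0 hF sub.
  apply: lc => //; apply: Con_subset sub; exact: Con_pair.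
Qed.
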